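(* Let $(\mathcal A,\varphi,\mathcal F,\Phi)$ be a ncps of type B$'$ with associated algebra $\mathcal B$ and functional $\varphi$ on $\mathcal B$. For $i\in I$ let $\mathcal A_i$ be a subalgebra of $\mathcal A$ containing $1_{\mathcal A}$, $\mathcal F_i$ a subalgebra of $\mathcal F$, and $\mathcal B_i=\mathcal A_i\langle\mathcal F_i\rangle=\mathcal A_i\oplus{}_{\mathcal A_i}\langle\mathcal F_i\rangle$. Let $P\in\mathcal F$ with $\Phi(P)\ne0$ and $\mathcal F_P:=\{cP^n:n\in\mathbb N,c\in\mathbb C\}$. Assume that $((\mathcal A_i)_{i\in I},(\mathcal F_i)_{i\in I\sqcup\{P\}})$ is weakly B$'$-free. Then for any $n\in\mathbb N$, $i_1,\dots,i_n\in I$ with $i_l\ne i_{l+1}$ for all $l$, and $b_j=a_j+F_j\in\mathcal B_{i_j}$ ($a_j\in\mathcal A_{i_j}$, $F_j\in{}_{\mathcal A_{i_j}}\langle\mathcal F_{i_j}\rangle$) with $\varphi(b_j)=0$ for $1\le j\le n$, $$\varphi_P(b_1b_2\cdots b_n)=\varphi_P(F_1F_2\cdots F_n).$$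
   Context: Ncps of type B$'$ $(\mathcal A,\varphi,\mathcal F,\Phi)$: $\mathcal A$ unital complex algebra, $\varphi(1_{\mathcal A})=1$, $\mathcal F$ an algebra which is an $\mathcal A$-bimodule compatible with its multiplication, $\Phi:\mathcal F\to\mathbb C$ linear. $\mathcal B=\mathcal A\oplus\mathcal F$ with product $(a_1,f_1)(a_2,f_2)=(a_1a_2,a_1f_2+f_1a_2+f_1f_2)$, unit $1_{\mathcal A}$; $\varphi(a+f):=\varphi(a)$. $\varphi_P(b):=\Phi(Pb)/\Phi(P)$. ${}_{\mathcal A_1}\langle\mathcal F_1\rangle$ denotes the span in $\mathcal F$ of all $a_0f_1a_1\cdots a_{n-1}f_na_n$ with $n\ge1$, $a_l\in\mathcal A_1$, $f_l\in\mathcal F_1$; $\mathcal A_1\langle\mathcal F_1\rangle=\mathcal A_1\oplus{}_{\mathcal A_1}\langle\mathcal F_1\rangle$ is the subalgebra of $\mathcal B$ generated by $\mathcal A_1\oplus\mathcal F_1$. Weak B$'$-freeness of $((\mathcal A_i)_{i\in I},(\mathcal F_j)_{j\in J})$: the $\mathcal A_i$ are free w.r.t. $\varphi$ ($\varphi(c_1\cdots c_n)=0$ for alternating indices and centered $c_l\in\mathcal A_{i_l}$), and with $\mathcal A_0$, $\mathcal F_0$ the algebras generated by all $\mathcal A_i$, resp. all $\mathcal F_j$, $\Phi(c_0g_1c_1\cdots c_{n-1}g_nc_n)=\varphi(c_0c_n)\prod_{l=1}^{n-1}\varphi(c_l)\Phi(g_1\cdots g_n)$ for $n\ge1$, $c_l\in\mathcal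 A_0$, $g_l\in\mathcal F_0$. *)

(* Defs.v *)
From HB Require Import structures.
From mathcomp Require Import all_boot all_order all_algebra.
From mathcomp Require Import complex Rstruct.
Set Implicit Arguments. Unset Strict Implicit. Unset Printing Implicit Defensive.
Import GRing.Theory.
Local Open Scope ring_scope.

Definition C : numClosedFieldType := (Rdefinitions.R)[i].

Section NCPS.
Variables (A : algType C) (F : lmodType C).
Variables (mulF : F -> F -> F) (lact : A -> F -> F) (ract : F -> A -> F).

Definition linear_to_C (V : lmodType C) (f : V -> C) :=
  forall (c : C) (x y : V), f (c *: x + y) = c * f x + f y.

(* (A, phi, F, Phi) is a ncps of type B': A unital complex algebra (algType),
   phi linear with phi 1 = 1, F a (not necessarily unital) complex algebra
   which is an A-bimodule compatible with its multiplication, Phi linear. *)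
Record ncpsB' (phi : A -> C) (Phi : F -> C) : Prop := {
  ncps_phi_lin : linear_to_C phi;
  ncps_phi1 : phi 1 = 1;
  ncps_Phi_lin : linear_to_C Phi;
  mulF_linl : forall (c : C) x y z, mulF (c *: x + y) z = c *: mulF x z + mulF y z;
  mulF_linr : forall (c : C) x y z, mulF x (c *: y + z) = c *: mulF x y + mulF x z;
  mulF_assoc : forall x y z, mulF x (mulF y z) = mulF (mulF x y) z;
  lact_linl : forall (c : C) a b f, lact (c *: a + b) f = c *: lact a f + lact b f;
  lact_linr : forall (c : C) a f g, lact a (c *: f + g) = c *: lact a f + lact a g;
  lact1 : forall f, lact 1 f = f;
  lactM : forall a b f, lact (a * b) f = lact a (lact b f);
  ract_linl : forall (c : C) f g a, ract (c *: f + g) a = c *: ract f a + ract g a;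
  ract_linr : forall (c : C) f a b, ract f (c *: a + b) = c *: ract f a + ract f b;
  ract1 : forall f, ract f 1 = f;
  ractM : forall f a b, ract f (a * b) = ract (ract f a) b;
  lact_ract : forall a f b, ract (lact a f) b = lact a (ract f b);
  lact_mulF : forall a f g, lact a (mulF f g) = mulF (lact a f) g;
  ract_mulF : forall f g a, ract (mulF f g) a = mulF f (ract g a);
  mid_mulF : forall f a g, mulF (ract f a) g = mulF f (lact a g)
}.

(* The algebra B = A (+) F, elements written as pairs (a, f) = a + f. *)
Definition mulB (b1 b2 : A * F) : A * F :=
  (b1.1 * b2.1, lact b1.1 b2.2 + ract b1.2 b2.1 + mulF b1.2 b2.2).
Definition oneB : A * F := (1, 0).
Definition prodB (s : seq (A * F)) : A * F := foldr mulB oneB s.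

Definition phiB (phi : A -> C) (b : A * F) : C := phi b.1.
Definition phiP (Phi : F -> C) (P : F) (b : A * F) : C :=
  Phi (ract P b.1 + mulF P b.2) / Phi P.

Definition subalgA (S : A -> Prop) : Prop :=
  [/\ S 1, (forall x y, S x -> S y -> S (x + y)),
      (forall (c : C) x, S x -> S (c *: x)) & (forall x y, S x -> S y -> S (x * y))].
Definition subalgF (S : F -> Prop) : Prop :=
  [/\ S 0, (forall x y, S x -> S y -> S (x + y)),
      (forall (c : C) x, S x -> S (c *: x)) & (forall x y, S x -> S y -> S (mulF x y))].

Fixpoint tailword (g : nat -> F) (c : nat -> A) (k m : nat) : F :=
  match m with
  | 0 => ract (g k) (c k)
  | m'.+1 => mulF (ract (g k) (c k)) (tailword g c k.+1 m')
  end.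
Fixpoint prodF (g : nat -> F) (k m : nat) : F :=
  match m with
  | 0 => g k
  | m'.+1 => mulF (g k) (prodF g k.+1 m')
  end.
(* powF p n = p^(n+1) *)
Fixpoint powF (p : F) (n : nat) : F :=
  match n with 0 => p | n'.+1 => mulF p (powF p n') end.

(* The span _{A1}<F1> of all a_0 f_1 a_1 ... f_n a_n, n >= 1 *)
Inductive AFspan (A1 : A -> Prop) (F1 : F -> Prop) : F -> Prop :=
  | AFspan_word (m : nat) (g : nat -> F) (c : nat -> A) :
      (forall l, (l <= m.+1)%N -> A1 (c l)) ->
      (forall l, (1 <= l <= m.+1)%N -> F1 (g l)) ->
      AFspan A1 F1 (lact (c 0%N) (tailword g c 1 m))
  | AFspan0 : AFspan A1 F1 0
  | AFspanD x y : AFspan A1 F1 x -> AFspan A1 F1 y -> AFspan A1 F1 (x + y)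
  | AFspanZ (k : C) x : AFspan A1 F1 x -> AFspan A1 F1 (k *: x).

Inductive genA (I : Type) (S : I -> A -> Prop) : A -> Prop :=
  | genA_base i x : S i x -> genA S x
  | genA1 : genA S 1
  | genAD x y : genA S x -> genA S y -> genA S (x + y)
  | genAZ (k : C) x : genA S x -> genA S (k *: x)
  | genAM x y : genA S x -> genA S y -> genA S (x * y).

Inductive genF (J : Type) (S : J -> F -> Prop) : F -> Prop :=
  | genF_base j x : S j x -> genF S x
  | genF0 : genF S 0
  | genFD x y : genF S x -> genF S y -> genF S (x + y)
  | genFZ (k : C) x : genF S x -> genF S (k *: x)
  | genFM x y : genF S x -> genF S y -> genF S (mulF x y).

Definition weakly_Bfree (phi : A -> C) (Phi : F -> C) (I J : Type)
    (Af : I -> A -> Prop) (Ff : J -> F -> Prop) : Prop :=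
  (forall (n : nat) (idx : nat -> I) (c : nat -> A),
      (0 < n)%N ->
      (forall l, (l.+1 < n)%N -> idx l <> idx l.+1) ->
      (forall l, (l < n)%N -> Af (idx l) (c l)) ->
      (forall l, (l < n)%N -> phi (c l) = 0) ->
      phi (\prod_(0 <= l < n) c l) = 0)
  /\
  (* Phi(c_0 g_1 c_1 ... g_n c_n) = phi(c_0 c_n) prod_{l=1}^{n-1} phi(c_l) Phi(g_1...g_n),
     for n = m+1 >= 1, c_l in A_0, g_l in F_0 *)
  (forall (m : nat) (g : nat -> F) (c : nat -> A),
      (forall l, (l <= m.+1)%N -> genA Af (c l)) ->
      (forall l, (1 <= l <= m.+1)%N -> genF Ff (g l)) ->
      Phi (lact (c 0%N) (tailword g c 1 m)) =
        phi (c 0%N * c m.+1) * (\prod_(1 <= l < m.+1) phi (c l)) * Phi (prodF g 1 m)).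

Definition FP (P : F) : F -> Prop := fun f => exists (k : C) (n : nat), f = k *: powF P n.

(* the family (F_i)_{i in I} extended by F_P at the extra index None *)
Definition extFam (I : Type) (Ff : I -> F -> Prop) (P : F) : option I -> F -> Prop :=
  fun j => match j with Some i => Ff i | None => FP P end.

End NCPS.

(* Main.v *)
Require Import Defs.
From HB Require Import structures.
From mathcomp Require Import all_boot all_order all_algebra.
From mathcomp Require Import complex Rstruct.
From mathcomp Require Import zify.
Set Implicit Arguments. Unset Strict Implicit. Unset Printing Implicit Defensive.
Import GRing.Theory.
Local Open Scope ring_scope.

Section Lin.
Definition linV (V W : lmodType C) (f : V -> W) :=
  forall (c : C) x y, f (c *: x + y) = c *: f x + f y.

Lemma linV0 (V W : lmodType C) (f : V -> W) : linV f -> f 0 = 0.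
Proof.
move=> H; have e := H 1 0 0; rewrite !scale1r !addr0 in e.
by apply: (addrI (f 0)); rewrite addr0 -e.
Qed.
Lemma linVD (V W : lmodType C) (f : V -> W) : linV f -> forall x y, f (x + y) = f x + f y.
Proof. by move=> H x y; have := H 1 x y; rewrite !scale1r. Qed.
Lemma linVZ (V W : lmodType C) (f : V -> W) : linV f -> forall c x, f (c *: x) = c *: f x.
Proof. by move=> H c x; have := H c x 0; rewrite !addr0 (linV0 H) addr0. Qed.

Lemma linC0 (V : lmodType C) (f : V -> C) : linear_to_C f -> f 0 = 0.
Proof.
move=> H; have e := H 1 0 0; rewrite !scale1r !addr0 mul1r in e.
by apply: (addrI (f 0)); rewrite addr0 -e.
Qed.
Lemma linCD (V : lmodType C) (f : V -> C) : linear_to_C f -> forall x y, f (x + y) = f x + f y.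
Proof. by move=> H x y; have := H 1 x y; rewrite scale1r mul1r. Qed.
Lemma linCZ (V : lmodType C) (f : V -> C) : linear_to_C f -> forall c x, f (c *: x) = c * f x.
Proof. by move=> H c x; have := H c x 0; rewrite !addr0 (linC0 H) addr0. Qed.
Lemma linC_comp (V W : lmodType C) (g : V -> W) (f : W -> C) :
  linear_to_C f -> linV g -> linear_to_C (fun x => f (g x)).
Proof. by move=> Hf Hg c x y; rewrite Hg Hf. Qed.
Lemma linV_comp (U V W : lmodType C) (g : U -> V) (f : V -> W) :
  linV f -> linV g -> linV (fun x => f (g x)).
Proof. by move=> Hf Hg c x y; rewrite Hg Hf. Qed.
End Lin.

Section Words.
Variables (A : algType C) (F : lmodType C) (phi : A -> C) (mulF : F -> F -> F)
  (lact : A -> F -> F) (ract : F -> A -> F) (Phi : F -> C).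
Hypothesis Hn : ncpsB' mulF lact ract phi Phi.

Lemma mulFl z : linV (fun x => mulF x z).
Proof. by move=> c x y; apply: (mulF_linl Hn). Qed.
Lemma mulFr z : linV (mulF z).
Proof. by move=> c x y; apply: (mulF_linr Hn). Qed.
Lemma ractl a : linV (fun x => ract x a).
Proof. by move=> c x y; apply: (ract_linl Hn). Qed.
Lemma ractr x : linV (ract x).
Proof. by move=> c a b; apply: (ract_linr Hn). Qed.
Lemma lactl x : linV (fun a => lact a x).
Proof. by move=> c a b; apply: (lact_linl Hn). Qed.
Lemma lactr a : linV (lact a).
Proof. by move=> c x y; apply: (lact_linr Hn). Qed.
Lemma PhiL : linear_to_C Phi. Proof. exact: (ncps_Phi_lin Hn). Qed.
Lemma phiL : linear_to_C phi. Proof. exact: (ncps_phi_lin Hn). Qed.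

Fixpoint uw (s : seq (F * A)) (g : F) : F :=
  if s is y :: s' then mulF (ract y.1 y.2) (uw s' g) else g.
Fixpoint pg (s : seq (F * A)) (g : F) : F :=
  if s is y :: s' then mulF y.1 (pg s' g) else g.

Lemma ract_uw s g c : ract (uw s g) c = uw s (ract g c).
Proof. by elim: s => //= y s IH; rewrite (ract_mulF Hn) IH. Qed.
Lemma mulF_uw s g z : mulF (uw s g) z = uw s (mulF g z).
Proof. by elim: s => //= y s IH; rewrite -(mulF_assoc Hn) IH. Qed.
Lemma uw_cat s t g : uw (s ++ t) g = uw s (uw t g).
Proof. by elim: s => //= y s ->. Qed.
Lemma uw_conc s g c t h : mulF (ract (uw s g) c) (uw t h) = uw (s ++ (g, c) :: t) h.
Proof. by rewrite ract_uw mulF_uw uw_cat. Qed.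
Lemma mid_lact x c c0 y : mulF (ract x c) (lact c0 y) = mulF (ract x (c * c0)) y.
Proof. by rewrite !(mid_mulF Hn) (lactM Hn). Qed.

Lemma tailword_uw (g : nat -> F) (c : nat -> A) k m :
  tailword mulF ract g c k m = uw [seq (g l, c l) | l <- iota k m] (ract (g (k + m)%N) (c (k + m)%N)).
Proof.
elim: m k => [|m IH] k /=; first by rewrite addn0.
by rewrite IH addSnnS.
Qed.
Lemma prodF_pg (g : nat -> F) (c : nat -> A) k m :
  prodF mulF g k m = pg [seq (g l, c l) | l <- iota k m] (g (k + m)%N).
Proof.
elim: m k => [|m IH] k /=; first by rewrite addn0.
by rewrite (IH k.+1) addSnnS.
Qed.

Variables (I J : Type) (Af : I -> A -> Prop) (Fg : J -> F -> Prop).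
Hypothesis Hw : weakly_Bfree mulF lact ract phi Phi Af Fg.
Notation gA := (genA Af).
Notation gF := (genF mulF Fg).
Definition Good (s : seq (F * A)) := forall y, y \in s -> gF y.1 /\ gA y.2.

Lemma map_nthS (s : seq (F * A)) x0 :
  [seq nth x0 s l.-1 | l <- iota 1 (size s)] = s.
Proof.
rewrite (iotaDl 1 0) -map_comp.
rewrite (eq_map (g := nth x0 s)) //.
by rewrite -/(mkseq (nth x0 s) (size s)) mkseq_nth.
Qed.

Lemma WF s g c : Good s -> gF g -> gA c ->
  Phi (ract (uw s g) c) = phi c * \prod_(y <- s) phi y.2 * Phi (pg s g).
Proof.
move=> Hs Hg Hc.
pose gf l := (nth (g, c) s l.-1).1.
pose cf l := if l is 0 then 1 else (nth (g, c) s l.-1).2.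
have Hmap : [seq (gf l, cf l) | l <- iota 1 (size s)] = s.
  rewrite -[RHS](map_nthS s (g, c)); apply/eq_in_map => l.
  rewrite mem_iota; case: l => //= l _.
  by rewrite /gf /cf /= -surjective_pairing.
have Hlast : nth (g, c) s (size s) = (g, c) by rewrite nth_default.
rewrite ract_uw; have := (proj2 Hw) (size s) gf cf.
rewrite /= (lact1 Hn) tailword_uw (prodF_pg _ cf) Hmap add1n.
rewrite /gf /cf /= Hlast /= mul1r => ->.
- congr (_ * _ * _).
  by rewrite -[in RHS]Hmap big_map /index_iota subSS subn0.
- case=> [|l] Hl; first exact: genA1.
  rewrite /cf; case: (ltnP l (size s)) => Hls.
  + by have := Hs _ (mem_nth (g, c) Hls) => -[].
  + by rewrite nth_default.
- case=> [|l] //= Hl.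
  case: (ltnP l (size s)) => Hls.
  + by have := Hs _ (mem_nth (g, c) Hls) => -[].
  + by rewrite nth_default.
Qed.

Inductive Uspan : F -> Prop :=
  | U_word s g : Good s -> gF g -> Uspan (uw s g)
  | U0 : Uspan 0
  | UD x y : Uspan x -> Uspan y -> Uspan (x + y)
  | UZ (k : C) x : Uspan x -> Uspan (k *: x).

Inductive Vspan (S : A -> Prop) : F -> Prop :=
  | V_word c0 s g d : S c0 -> Good s -> gF g -> gA d -> Vspan S (lact c0 (ract (uw s g) d))
  | V0 : Vspan S 0
  | VD x y : Vspan S x -> Vspan S y -> Vspan S (x + y)
  | VZ (k : C) x : Vspan S x -> Vspan S (k *: x).

Lemma Good_cat s t g c : Good s -> Good t -> gF g -> gA c -> Good (s ++ (g, c) :: t).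
Proof.
move=> Hs Ht Hg Hc y; rewrite mem_cat inE => /orP[/Hs //|/orP[/eqP -> //|/Ht //]].
Qed.



Lemma Z1 u q : Uspan u -> gA q -> phi q = 0 -> Phi (ract u q) = 0.
Proof.
move=> Hu Hq Hq0; have L := linC_comp PhiL (ractl q).
elim: Hu => {u} [s g Hs Hg| |x y _ IHx _ IHy|k x _ IHx].
- by rewrite (WF Hs Hg Hq) Hq0 !mul0r.
- exact: (linC0 L).
- by rewrite (linCD L) IHx IHy addr0.
- by rewrite (linCZ L) IHx mulr0.
Qed.

Lemma Z2 S u v q : Uspan u -> Vspan S v -> gA q ->
  (forall c0, S c0 -> gA c0 /\ phi (q * c0) = 0) ->
  Phi (mulF (ract u q) v) = 0.
Proof.
move=> Hu Hv Hq HS.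
have L1 := fun v => linC_comp PhiL (linV_comp (mulFl v) (ractl q)).
elim: Hu => {u} [s g Hs Hg| |x y _ IHx _ IHy|k x _ IHx]; last 3 first.
- exact: (linC0 (L1 v)).
- by rewrite (linCD (L1 v)) IHx IHy addr0.
- by rewrite (linCZ (L1 v)) IHx mulr0.
have L2 := linC_comp PhiL (mulFr (ract (uw s g) q)).
elim: Hv => {v} [c0 t h d Hc0 Ht Hh Hd| |x y _ IHx _ IHy|k x _ IHx]; last 3 first.
- exact: (linC0 L2).
- by rewrite (linCD L2) IHx IHy addr0.
- by rewrite (linCZ L2) IHx mulr0.
have [gc0 phc0] := HS c0 Hc0.
rewrite mid_lact -(ract_mulF Hn) uw_conc (WF _ Hh Hd); last first.
  by apply: Good_cat => //; apply: genAM.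
by rewrite big_cat big_cons /= phc0 !(mul0r, mulr0).
Qed.

Lemma UM u c s g : Uspan u -> gA c -> Good s -> gF g -> Uspan (mulF (ract u c) (uw s g)).
Proof.
move=> Hu Hc Hs Hg; have L := linV_comp (mulFl (uw s g)) (ractl c).
elim: Hu => {u} [s0 g0 Hs0 Hg0| |x y _ IHx _ IHy|k x _ IHx].
- by rewrite uw_conc; apply: U_word => //; apply: Good_cat.
- by rewrite (linV0 L); apply: U0.
- by rewrite (linVD L); apply: UD.
- by rewrite (linVZ L); apply: UZ.
Qed.

Lemma VM S T v w : Vspan S v -> Vspan T w -> (forall x, T x -> gA x) -> Vspan S (mulF v w).
Proof.
move=> Hv Hw' HT.
elim: Hv => {v} [c0 s g d Hc0 Hs Hg Hd| |x y _ IHx _ IHy|k x _ IHx]; last 3 first.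
- by rewrite (linV0 (mulFl w)); apply: V0.
- by rewrite (linVD (mulFl w)); apply: VD.
- by rewrite (linVZ (mulFl w)); apply: VZ.
have L := mulFr (lact c0 (ract (uw s g) d)).
elim: Hw' => {w} [c1 t h e Hc1 Ht Hh He| |x y _ IHx _ IHy|k x _ IHx]; last 3 first.
- by rewrite (linV0 L); apply: V0.
- by rewrite (linVD L); apply: VD.
- by rewrite (linVZ L); apply: VZ.
rewrite -(lact_mulF Hn) mid_lact -(ract_mulF Hn) uw_conc.
apply: V_word => //; apply: Good_cat => //; apply: genAM => //; exact: HT.
Qed.

Lemma AFword (g : nat -> F) (c : nat -> A) m :
  lact (c 0%N) (tailword mulF ract g c 1 m) =
  lact (c 0%N) (ract (uw [seq (g l, c l) | l <- iota 1 m] (g m.+1)) (c m.+1)).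
Proof. by rewrite tailword_uw ract_uw add1n. Qed.

Lemma Good_ws (SA : A -> Prop) (SF : F -> Prop) (g : nat -> F) (c : nat -> A) m :
  (forall x, SA x -> gA x) -> (forall x, SF x -> gF x) ->
  (forall l, (l <= m.+1)%N -> SA (c l)) ->
  (forall l, (1 <= l <= m.+1)%N -> SF (g l)) ->
  Good [seq (g l, c l) | l <- iota 1 m].
Proof.
move=> HA HF Hc Hg y /mapP[l]; rewrite mem_iota => /andP[H1 H2] -> /=.
split; [apply: HF; apply: Hg | apply: HA; apply: Hc]; lia.
Qed.

Lemma AF_V (SA : A -> Prop) (SF : F -> Prop) x :
  (forall x, SA x -> gA x) -> (forall x, SF x -> gF x) ->
  AFspan mulF lact ract SA SF x -> Vspan SA x.
Proof.
move=> HA HF; elim=> {x} [m g c Hc Hg| |x y _ IHx _ IHy|k x _ IHx].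
- rewrite AFword; apply: V_word.
  + exact: Hc.
  + exact: (Good_ws HA HF Hc Hg).
  + apply: HF; apply: Hg; lia.
  + apply: HA; apply: Hc; lia.
- exact: V0.
- exact: VD.
- exact: VZ.
Qed.

Definition act (x : F) (b : A * F) : F := ract x b.1 + mulF x b.2.

Lemma actl b : linV (fun x => act x b).
Proof.
move=> c x y; rewrite /act (ract_linl Hn) (mulF_linl Hn) scalerDr.
by rewrite addrACA.
Qed.

Lemma actM x b R : act x (mulB mulF lact ract b R) = act (ract x b.1) R + act (mulF x b.2) R.
Proof.
rewrite /act /mulB /= (ractM Hn) !(linVD (mulFr x)) -(mid_mulF Hn) -(ract_mulF Hn).
by rewrite (mulF_assoc Hn) !addrA.
Qed.

Lemma act_one x : act x (oneB A F) = x.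
Proof. by rewrite /act /= (ract1 Hn) (linV0 (mulFr x)) addr0. Qed.

Variables (Ff : I -> F -> Prop) (P : F) (n : nat) (idx : nat -> I) (a : nat -> A) (f : nat -> F).
Hypothesis HFf : forall i x, Ff i x -> gF x.
Hypothesis HP : gF P.
Hypothesis Hsub : forall i, subalgA (Af i).
Hypothesis Halt : forall l, (l.+1 < n)%N -> idx l <> idx l.+1.
Hypothesis Ha : forall j, (j < n)%N -> Af (idx j) (a j).
Hypothesis Hf : forall j, (j < n)%N -> AFspan mulF lact ract (Af (idx j)) (Ff (idx j)) (f j).
Hypothesis Hphi0 : forall j, (j < n)%N -> phi (a j) = 0.

Lemma FreeSeg s0 s1 (e : nat -> A) : (s0 < s1)%N -> (s1 <= n)%N ->
  (forall l, (s0 <= l < s1)%N -> Af (idx l) (e l) /\ phi (e l) = 0) ->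
  phi (\prod_(s0 <= l < s1) e l) = 0.
Proof.
move=> H01 H1n He.
rewrite (_ : \prod_(s0 <= l < s1) e l = \prod_(0 <= l < s1 - s0) e (s0 + l)%N); last first.
  by rewrite -{1}[s0]add0n big_addn; apply: eq_bigr => i _; rewrite addnC.
apply: (proj1 Hw) (fun l => idx (s0 + l)%N) (fun l => e (s0 + l)%N) _ _ _ _.
- lia.
- move=> l Hl; rewrite addnS; apply: Halt; lia.
- move=> l Hl; apply: (He (s0 + l)%N _).1; apply/andP; split; lia.
- move=> l Hl; apply: (He (s0 + l)%N _).2; apply/andP; split; lia.
Qed.

Definition eseq (bl br : bool) (cl cr : A) (j k l : nat) :=
  if bl && (l == j.-1) then cl else if br && (l == k) then cr else a l.

Lemma FreeX (bl br : bool) cl cr j k : (j < k)%N -> (k <= n)%N ->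
  (bl -> (0 < j)%N /\ Af (idx j.-1) cl /\ phi cl = 0) ->
  (br -> (k < n)%N /\ Af (idx k) cr /\ phi cr = 0) ->
  phi ((if bl then cl else 1) * \prod_(j <= l < k) a l * (if br then cr else 1)) = 0.
Proof.
move=> Hjk Hkn Hl Hr.
have Hmid : \prod_(j <= l < k) a l = \prod_(j <= l < k) eseq bl br cl cr j k l.
  apply: eq_big_nat => l /andP[H1 H2]; rewrite /eseq.
  case: bl Hl => Hl /=.
    have [Hj _] := Hl isT; have -> : (l == j.-1) = false by apply/eqP; lia.
    by case: br Hr => //= _; have -> : (l == k) = false by apply/eqP; lia.
  by case: br Hr => //= _; have -> : (l == k) = false by apply/eqP; lia.
have Hprod : (if bl then cl else 1) * \prod_(j <= l < k) a l * (if br then cr else 1)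
    = \prod_(j - bl <= l < k + br) eseq bl br cl cr j k l.
  rewrite Hmid.
  have HL : (if bl then cl else 1) * \prod_(j <= l < k + br) eseq bl br cl cr j k l
          = \prod_(j - bl <= l < k + br) eseq bl br cl cr j k l.
    clear Hmid; case: bl Hl => Hl /=; last by rewrite ?subn0 mul1r.
    have [Hj _] := Hl isT.
    rewrite (big_ltn (m := j - 1)); last by lia.
    have -> : (j - 1).+1 = j by lia.
    by rewrite /eseq subn1 eqxx.
  rewrite -HL -mulrA; congr (_ * _).
  clear HL Hmid; case: br Hr => Hr /=; last by rewrite ?addn0 ?mulr1.
  have [Hk _] := Hr isT.
  rewrite addn1 big_nat_recr /=; last by lia.
  congr (_ * _); rewrite /eseq eqxx andbT.
  by case: bl Hl => //= Hl; have -> : (k == j.-1) = false by apply/eqP; lia.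
rewrite Hprod; apply: FreeSeg.
- case: bl Hl {Hprod Hmid} => Hl /=; lia.
- by case: br Hr {Hprod Hmid} => Hr /=; [have := Hr isT; lia | lia].
move=> l /andP[H1 H2]; rewrite /eseq.
case: bl Hl H1 {Hprod Hmid} => Hl H1 /=.
  case: (eqVneq l j.-1) => [->|Hne]; first by have := Hl isT => -[_ []].
  case: br Hr H2 => Hr H2 /=.
    case: (eqVneq l k) => [->|Hne2]; first by have := Hr isT => -[_ []].
    split; [apply: Ha | apply: Hphi0]; have := Hr isT; lia.
  have [Hj _] := Hl isT; split; [apply: Ha | apply: Hphi0]; lia.
case: br Hr H2 => Hr H2 /=.
  case: (eqVneq l k) => [->|Hne2]; first by have := Hr isT => -[_ []].
  split; [apply: Ha | apply: Hphi0]; have := Hr isT; lia.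
split; [apply: Ha | apply: Hphi0]; lia.
Qed.

Definition cen (x : A) : A := x - phi x *: 1.

Lemma cenE x : x = phi x *: 1 + cen x.
Proof. by rewrite /cen addrC subrK. Qed.

Lemma cen_in i x : Af i x -> Af i (cen x) /\ phi (cen x) = 0.
Proof.
move=> Hx; have [H1 HD HZ _] := Hsub i; split.
  by rewrite /cen -scaleNr; apply: HD => //; apply: HZ.
rewrite /cen -scaleNr (linCD phiL) (linCZ phiL) (ncps_phi1 Hn).
by rewrite mulr1 addrN.
Qed.

Lemma Free j k c c' : (j < k)%N -> (k <= n)%N ->
  (c = 1 \/ (0 < j)%N /\ Af (idx j.-1) c) ->
  (c' = 1 \/ (k < n)%N /\ Af (idx k) c') ->
  phi (c * \prod_(j <= l < k) a l * c') = 0.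
Proof.
move=> Hjk Hkn Hc Hc'.
have Hr : forall (bl : bool) cl, (bl -> (0 < j)%N /\ Af (idx j.-1) cl /\ phi cl = 0) ->
    phi ((if bl then cl else 1) * \prod_(j <= l < k) a l * c') = 0.
  move=> bl cl Hl; case: Hc' => [->|[Hk Hc']].
    by have := FreeX (br := false) (cr := 1) Hjk Hkn Hl; apply => //.
  rewrite [c'](cenE c') mulrDr -scalerAr mulr1 (linCD phiL) (linCZ phiL).
  have E1 : phi ((if bl then cl else 1) * \prod_(j <= l < k) a l) = 0.
    by have := FreeX (br := false) (cr := 1) Hjk Hkn Hl; rewrite mulr1; apply.
  rewrite E1 mulr0 add0r.
  have [H1 H2] := cen_in Hc'.
  by have := FreeX (br := true) (cr := cen c') Hjk Hkn Hl; apply.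
case: Hc => [->|[Hj Hc]].
  by have := Hr false c => /= ->.
rewrite [c](cenE c) mulrDl mulrDl -scalerAl mul1r -scalerAl (linCD phiL) (linCZ phiL).
have [H1 H2] := cen_in Hc.
have E2 : phi (\prod_(j <= l < k) a l * c') = 0.
  by have := Hr false c; rewrite /= mul1r; apply.
by rewrite E2 (Hr true (cen c)) // mulr0 add0r.
Qed.

Definition okc j c := c = 1 \/ (0 < j)%N /\ Af (idx j.-1) c.

Lemma gA_q j k c : (k <= n)%N -> okc j c -> gA (c * \prod_(j <= l < k) a l).
Proof.
move=> Hkn Hc; apply: genAM.
  by case: Hc => [->|[_ H]]; [apply: genA1 | apply: genA_base H].
rewrite big_nat; apply: (big_ind gA); [exact: genA1 | exact: genAM |].
move=> l /andP[H1 H2]; apply: genA_base (Ha _); lia.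
Qed.

Definition R k := prodB mulF lact ract [seq (a j, f j) | j <- iota k (n - k)].
Definition R' k := prodB mulF lact ract [seq ((0 : A), f j) | j <- iota k (n - k)].

Lemma R_S k : (k < n)%N -> R k = mulB mulF lact ract (a k, f k) (R k.+1).
Proof. by move=> Hk; rewrite /R (_ : n - k = (n - k.+1).+1)%N //; lia. Qed.
Lemma R'_S k : (k < n)%N -> R' k = mulB mulF lact ract (0, f k) (R' k.+1).
Proof. by move=> Hk; rewrite /R' (_ : n - k = (n - k.+1).+1)%N //; lia. Qed.
Lemma R_n : R n = oneB A F. Proof. by rewrite /R subnn. Qed.
Lemma R'_n : R' n = oneB A F. Proof. by rewrite /R' subnn. Qed.

Lemma fV k : (k < n)%N -> Vspan (Af (idx k)) (f k).
Proof.
move=> Hk; apply: (AF_V (SF := Ff (idx k))) (Hf Hk).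
  by move=> x Hx; apply: genA_base Hx.
by move=> x; apply: HFf.
Qed.

Lemma RV m : forall k, (k + m.+1 = n)%N -> (R' k).1 = 0 /\ Vspan (Af (idx k)) (R' k).2.
Proof.
elim: m => [|m IH] k Hk; rewrite R'_S /=; try lia.
- rewrite mul0r (linV0 (lactl _)) add0r; split => //.
  have -> : k.+1 = n by lia.
  rewrite R'_n /= (ract1 Hn) (linV0 (mulFr _)) addr0; apply: fV; lia.
- have [H1 H2] := IH k.+1 (ltac:(lia)).
  rewrite mul0r (linV0 (lactl _)) add0r H1 (linV0 (ractr _)) add0r; split => //.
  apply: (VM (T := Af (idx k.+1))) => //; first by apply: fV; lia.
  by move=> x Hx; apply: genA_base Hx.
Qed.

Lemma Hlem k j c u : (k <= n)%N -> (j < k)%N -> okc j c -> Uspan u ->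
  Phi (act (ract u (c * \prod_(j <= l < k) a l)) (R' k)) = 0.
Proof.
move=> Hkn Hjk Hc Hu.
case: (ltnP k n) => Hk.
- have [H1 H2] := RV (m := (n - k).-1) (k := k) ltac:(lia).
  rewrite /act H1 (linV0 (ractr _)) add0r.
  apply: Z2 Hu H2 (gA_q Hkn Hc) _ => c0 Hc0; split; first exact: genA_base Hc0.
  by apply: Free => //; right; split.
- have -> : k = n by lia.
  rewrite R'_n act_one; apply: Z1 Hu (gA_q (leqnn n) Hc) _.
  by rewrite -[_ * _]mulr1; apply: Free => //; [lia | left].
Qed.

Lemma act0 b : act 0 b = 0.
Proof. exact: (linV0 (actl b)). Qed.

Lemma Glem m : forall k, (k + m = n)%N -> forall u j c, Uspan u -> (j <= k)%N -> okc j c ->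
  Phi (act (ract u (c * \prod_(j <= l < k) a l)) (R k)) =
  Phi (act (ract u (c * \prod_(j <= l < k) a l)) (R' k)).
Proof.
elim: m => [|m IH] k Hk u j c Hu Hjk Hc.
  have -> : k = n by lia.
  by rewrite R_n R'_n.
have Hkn : (k < n)%N by lia.
rewrite (R_S Hkn) (R'_S Hkn) !actM /= (linV0 (ractr _)) act0 add0r.
rewrite (linCD PhiL) -(ractM Hn) -mulrA -big_nat_recr //=.
have Hk1 : (k.+1 + m = n)%N by lia.
have Hjk1 : (j <= k.+1)%N by lia.
rewrite (IH k.+1 Hk1 u j c Hu Hjk1 Hc).
rewrite (Hlem (k := k.+1)) //; try lia.
rewrite add0r.
set q := c * _.
have Hq : gA q by apply: gA_q => //; lia.
have L := fun R0 => linC_comp PhiL (linV_comp (actl R0) (mulFr (ract u q))).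
elim: (Hf Hkn) => {Hkn}.
- move=> m' g cc Hcc Hg; rewrite AFword mid_lact -(ract_mulF Hn).
  set u' := mulF _ _.
  have Hu' : Uspan u'.
    apply: UM => //; first by apply: genAM => //; apply: genA_base (Hcc 0%N _).
      exact: (Good_ws (SA := Af (idx k)) (SF := Ff (idx k))) (fun x Hx => genA_base Hx) (HFf (i := idx k)) Hcc Hg.
    apply: HFf (Hg _ _); lia.
  have := IH k.+1 Hk1 u' k.+1 (cc m'.+1) Hu' (leqnn _) (or_intror (conj (ltn0Sn k) (Hcc _ (leqnn _)))).
  by rewrite big_geq // mulr1.
- by rewrite !(linC0 (L _)).
- by move=> x y _ IHx _ IHy; rewrite !(linCD (L _)) IHx IHy.
- by move=> k0 x _ IHx; rewrite !(linCZ (L _)) IHx.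
Qed.

Lemma mainlem : Phi (act P (R 0)) = Phi (act P (R' 0)).
Proof.
have HU : Uspan P by apply: (U_word (s := [::])) => // y.
have := Glem (m := n) (k := 0) ltac:(lia) HU (leqnn 0) (or_introl (erefl (1 : A))).
by rewrite big_geq // mulr1 (ract1 Hn).
Qed.

End Words.

Theorem lemma4p7 (A : algType C) (F : lmodType C)
    (phi : A -> C) (mulF : F -> F -> F) (lact : A -> F -> F) (ract : F -> A -> F)
    (Phi : F -> C) (I : Type) (Af : I -> A -> Prop) (Ff : I -> F -> Prop) (P : F) :
  ncpsB' mulF lact ract phi Phi ->
  (forall i, subalgA (Af i)) ->
  (forall i, subalgF mulF (Ff i)) ->
  Phi P != 0 ->
  weakly_Bfree mulF lact ract phi Phi Af (extFam mulF Ff P) ->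
  forall (n : nat) (idx : nat -> I) (a : nat -> A) (f : nat -> F),
    (forall l, (l.+1 < n)%N -> idx l <> idx l.+1) ->
    (forall j, (j < n)%N -> Af (idx j) (a j)) ->
    (forall j, (j < n)%N -> AFspan mulF lact ract (Af (idx j)) (Ff (idx j)) (f j)) ->
    (forall j, (j < n)%N -> phiB phi (a j, f j) = 0) ->
    phiP mulF ract Phi P (prodB mulF lact ract [seq (a j, f j) | j <- iota 0 n]) =
    phiP mulF ract Phi P (prodB mulF lact ract [seq (0, f j) | j <- iota 0 n]).
Proof.
move=> Hn Hsub _ _ Hw n idx a f Halt Ha Hf Hphi0.
have HFf : forall i x, Ff i x -> genF mulF (extFam mulF Ff P) x.
  by move=> i x Hx; exact: (@genF_base _ mulF _ (extFam mulF Ff P) (Some i) x).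
have HP : genF mulF (extFam mulF Ff P) P.
  by apply: (@genF_base _ mulF _ (extFam mulF Ff P) None P); exists 1, 0%N; rewrite scale1r.
have Hphi0' : forall j, (j < n)%N -> phi (a j) = 0 by exact: Hphi0.
have := mainlem Hn Hw HFf HP Hsub Halt Ha Hf Hphi0'.
rewrite /act /R /R' subn0 /phiP => ->.
by [].
Qed.
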